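(* Let $M$ be a finite rectangular monoid, $k$ a field, and $e\in E(M)$. Then $(emene,emne)\in\mathrm{rad}^2(M)$ for all $m,n\in M$. In particular, if $B$ is a finite band, then $B/\mathrm{rad}^2(B)$ is a regular band.
   Context: $E(M)$ is the set of idempotents; $M$ is rectangular if each set $\{f\in E(M): MfM=MeM\}$ is closed under multiplication. $\mathrm{rad}^2(M)$ is the congruence on $M$ given by $(m,n)\in\mathrm{rad}^2(M)$ iff $m-n\in\mathrm{rad}(kM)^2$, where $\mathrm{rad}$ is the Jacobson radical. A band is a monoid in which every element is idempotent (bands are rectangular); a regular band is a band satisfying $xyxzx=xyzx$ for all $x,y,z$. *)

(* Defs.v *)
From mathcomp Require Import all_boot all_algebra.
Set Implicit Arguments. Unset Strict Implicit. Unset Printing Implicit Defensive.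
Import GRing.Theory.
Local Open Scope ring_scope.

(* The monoid algebra kM is realised as {ffun M -> k} with the usual
   (pointwise) k-vector-space structure and convolution product. *)
Section MonoidAlgebra.
Variables (k : fieldType) (M : finType) (mul : M -> M -> M) (one : M).

Definition monoid_assoc := forall a b c, mul a (mul b c) = mul (mul a b) c.
Definition monoid_unit := forall a, mul one a = a /\ mul a one = a.

Definition mconv (f g : {ffun M -> k}) : {ffun M -> k} :=
  [ffun m => \sum_(a : M) \sum_(b : M | mul a b == m) f a * g b].

Definition mdelta (m : M) : {ffun M -> k} := [ffun x => (x == m)%:R].

Definition is_left_ideal (I : {ffun M -> k} -> Prop) :=
  [/\ I 0, (forall x y, I x -> I y -> I (x + y)) &
      (forall a x, I x -> I (mconv a x))].

Definition is_maximal_left_ideal (I : {ffun M -> k} -> Prop) :=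
  [/\ is_left_ideal I, (exists x, ~ I x) &
      (forall J, is_left_ideal J -> (forall x, I x -> J x) ->
                 (exists x, ~ J x) -> forall x, J x -> I x)].

Definition jacobson_rad (x : {ffun M -> k}) : Prop :=
  forall I, is_maximal_left_ideal I -> I x.

Definition rad_sq (x : {ffun M -> k}) : Prop :=
  exists s : seq ({ffun M -> k} * {ffun M -> k}),
    (forall p, p \in s -> jacobson_rad p.1 /\ jacobson_rad p.2) /\
    x = \sum_(p <- s) mconv p.1 p.2.

Definition rad2_rel (m n : M) : Prop := rad_sq (mdelta m - mdelta n).

Definition is_idem (e : M) := mul e e = e.

Definition same_J (f e : M) :=
  forall x, (exists a b, x = mul (mul a f) b) <-> (exists a b, x = mul (mul a e) b).

Definition rectangular :=
  forall e f g, is_idem e -> is_idem f -> is_idem g ->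
    same_J f e -> same_J g e -> is_idem (mul f g) /\ same_J (mul f g) e.

Definition band := forall x, is_idem x.

End MonoidAlgebra.

(* Main.v *)
Require Import Defs.
From Stdlib Require Import Classical.
From mathcomp Require Import all_boot all_algebra ring.
Set Implicit Arguments. Unset Strict Implicit. Unset Printing Implicit Defensive.
Import GRing.Theory.

Section Mon.
Variables (M : finType) (mul : M -> M -> M) (one : M).
Hypothesis massoc : monoid_assoc mul.
Hypothesis munit : monoid_unit mul one.
Local Notation "a ** b" := (mul a b) (at level 40, left associativity).

Lemma mA a b c : a ** (b ** c) = a ** b ** c. Proof. exact: massoc. Qed.
Lemma m1x a : one ** a = a. Proof. by case: (munit a). Qed.
Lemma mx1 a : a ** one = a. Proof. by case: (munit a). Qed.

Fixpoint mp_rec (x : M) n := if n is n'.+1 then x ** mp_rec x n' else one.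
Definition mp := locked mp_rec.

Lemma mp0 x : mp x 0 = one. Proof. by rewrite /mp -lock. Qed.
Lemma mpS x n : mp x n.+1 = x ** mp x n. Proof. by rewrite /mp -lock. Qed.
Lemma mpD x a b : mp x (a + b) = mp x a ** mp x b.
Proof. elim: a => [|a IH]; first by rewrite add0n mp0 m1x. by rewrite addSn !mpS IH mA. Qed.

Lemma mpSr x n : mp x n.+1 = mp x n ** x.
Proof. by rewrite -addn1 mpD mpS mp0 mx1. Qed.

Lemma mpM x a b : mp x (a * b) = mp (mp x a) b.
Proof. elim: b => [|b IH]; first by rewrite muln0 !mp0. by rewrite mulnS mpD IH mpS. Qed.

Lemma idem_pow x : exists n, 0 < n /\ mp x n ** mp x n = mp x n.
Proof.
pose g (i : 'I_(#|M|.+1)) := mp x i.+1.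
have : ~~ injectiveb g.
  apply/negP => /injectiveP inj; have := @leq_card _ _ g inj.
  by rewrite card_ord ltnn.
case/injectivePn => i [j] nij eqg.
have key : forall a b, a < b -> mp x a.+1 = mp x b.+1 -> exists n, 0 < n /\ mp x n ** mp x n = mp x n.
  move=> a b ab E.
  set p := b - a. set q := a.+1.
  have Hq : mp x q = mp x (q + p) by rewrite /q /p addSn subnKC ?(ltnW ab).
  have Hp : forall s, mp x (q + s + p) = mp x (q + s).
    move=> s; rewrite addnAC mpD -Hq -mpD //.
  have Hr : forall r s, mp x (q + s) = mp x (q + s + r * p).
    elim=> [|r IH] s; first by rewrite mul0n addn0.
    have -> : q + s + r.+1 * p = q + (s + r * p) + p by rewrite mulSn !addnA addnAC.
    by rewrite Hp addnA -IH.
  exists (q * p); split; first by rewrite muln_gt0 /q /p subn_gt0 ab.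
  rewrite -mpD.
  have -> : q * p + q * p = q + (q * p - q) + q * p.
    by rewrite subnKC // leq_pmulr // /p subn_gt0.
  by rewrite -Hr subnKC // leq_pmulr // /p subn_gt0.
case: (ltngtP i j) => h.
- exact: (key _ _ h eqg).
- exact: (key _ _ h (esym eqg)).
- by move: nij; rewrite (val_inj h) eqxx.
Qed.

Lemma sandwich_iter x a b : x = a ** x ** b -> forall n, x = mp a n ** x ** mp b n.
Proof.
move=> E; elim=> [|n IH]; first by rewrite !mp0 m1x mx1.
rewrite mpS mpSr.
have -> : a ** mp a n ** x ** (mp b n ** b) = a ** (mp a n ** x ** mp b n) ** b by rewrite !mA.
by rewrite -IH.
Qed.

Definition leJ u v := [exists a, exists b, u == a ** v ** b].
Lemma leJP u v : reflect (exists a b, u = a ** v ** b) (leJ u v).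
Proof.
apply: (iffP existsP) => [[a /existsP [b /eqP E]]|[a [b E]]]; first by exists a, b.
by exists a; apply/existsP; exists b; apply/eqP.
Qed.

Lemma leJ_refl u : leJ u u. Proof. by apply/leJP; exists one, one; rewrite m1x mx1. Qed.
Lemma leJ_trans v u w : leJ u v -> leJ v w -> leJ u w.
Proof.
move=> /leJP [a [b ->]] /leJP [c [d ->]]; apply/leJP; exists (a ** c), (d ** b).
by rewrite !mA.
Qed.
Lemma leJ_l u v : leJ (u ** v) u.
Proof. by apply/leJP; exists one, v; rewrite m1x. Qed.
Lemma leJ_r u v : leJ (u ** v) v.
Proof. by apply/leJP; exists u, one; rewrite mx1. Qed.
Lemma leJ_sw a u b : leJ (a ** u ** b) u.
Proof. by apply/leJP; exists a, b. Qed.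

Definition jeq u v := leJ u v && leJ v u.

Lemma stabR u v : leJ u (u ** v) -> exists w, u = u ** v ** w.
Proof.
move=> /leJP [a [b E]].
have E' : u = a ** u ** (v ** b) by rewrite {1}E !mA.
case: (idem_pow (v ** b)) => [[|n] [// _ Id]].
have S := sandwich_iter E' n.+1.
have U : u ** mp (v ** b) n.+1 = u by rewrite {1}S -mA Id -S.
exists (b ** mp (v ** b) n).
by rewrite -{1}U mpS !mA.
Qed.

Lemma stabL u v : leJ v (u ** v) -> exists w, v = w ** u ** v.
Proof.
move=> /leJP [a [b E]].
have E' : v = (a ** u) ** v ** b by rewrite {1}E !mA.
case: (idem_pow (a ** u)) => [[|n] [// _ Id]].
have S := sandwich_iter E' n.+1.
have U : mp (a ** u) n.+1 ** v = v by rewrite {1}S !mA Id -S.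
exists (mp (a ** u) n ** a).
by rewrite -{1}U mpSr !mA.
Qed.

Lemma nullJ s t u : leJ t (s ** t ** u) ->
  exists E, [/\ E ** E = E, leJ E u & leJ t E].
Proof.
move=> /leJP [p [q E]].
have E' : t = (p ** s) ** t ** (u ** q) by rewrite {1}E !mA.
case: (idem_pow (u ** q)) => [[|n] [// _ Id]].
have S := sandwich_iter E' n.+1.
exists (mp (u ** q) n.+1); split => //.
  by apply/leJP; exists one, (q ** mp (u ** q) n); rewrite m1x mpS mA.
by apply/leJP; exists (mp (p ** s) n.+1 ** t), one; rewrite mx1; exact: S.
Qed.

Lemma leJ_jeq f x y : jeq f x -> leJ x y -> leJ y f -> jeq f y.
Proof. by case/andP=> h1 h2 h3 h4; rewrite /jeq h4 (leJ_trans h1 h3). Qed.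

Lemma jeq_sym x y : jeq x y = jeq y x.
Proof. by rewrite /jeq andbC. Qed.

Lemma jeq_trans x y z : jeq x y -> jeq y z -> jeq x z.
Proof.
case/andP=> h1 h2 /andP [h3 h4]; apply/andP; split; first exact: leJ_trans h1 h3.
exact: leJ_trans h4 h2.
Qed.

Hypothesis rect : rectangular mul.

Lemma jeq_sameJ e g : jeq e g -> same_J mul g e.
Proof.
case/andP=> h1 h2 x; split=> H.
  have H' : leJ x g by apply/leJP.
  by apply/leJP; exact: leJ_trans H' h2.
have H' : leJ x e by apply/leJP.
by apply/leJP; exact: leJ_trans H' h1.
Qed.

Ltac lej a b := apply/leJP; exists a, b; rewrite ?m1x ?mx1 ?mA ?m1x ?mx1 //.

Section Jf.
Variable f : M.
Hypothesis ff : f ** f = f.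
Local Notation J x := (jeq f x).

Lemma Jf : J f. Proof. by rewrite /jeq leJ_refl. Qed.

Lemma closeE g h : g ** g = g -> h ** h = h -> J g -> J h ->
  (g ** h) ** (g ** h) = g ** h /\ J (g ** h).
Proof.
move=> gg hh Jg Jh.
have [] := rect ff gg hh (jeq_sameJ Jg) (jeq_sameJ Jh).
rewrite /is_idem => -> S; split => //; apply/andP; split.
  by apply/leJP; apply/S; exists one, one; rewrite m1x mx1.
by apply/leJP; apply/S; exists one, one; rewrite m1x mx1.
Qed.

Lemma regular x : J x -> exists x', x = x ** x' ** x.
Proof.
case/andP=> /leJP [a [b Ef]] xf.
have [w E1] : exists w, x = w ** a ** x.
  apply: stabL; apply: leJ_trans xf _; rewrite Ef; exact: leJ_l.
have [w' E2] : exists w', a ** x = a ** x ** b ** w'.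
  apply: stabR; rewrite -Ef; apply: leJ_trans xf; exact: leJ_r.
have E2' : a ** x = f ** w' by rewrite E2 -Ef.
have Fax : f ** (a ** x) = a ** x by rewrite E2' mA ff.
exists (b ** a).
have -> : x ** (b ** a) ** x = w ** (f ** (a ** x)) by rewrite Ef {1}E1 !mA.
by rewrite Fax mA -E1.
Qed.

Lemma rb a b : a ** a = a -> b ** b = b -> J a -> J b -> a ** b ** a = a.
Proof.
move=> aa bb Ja Jb.
have [iab Jab] := closeE aa bb Ja Jb.
have [ip Jp] := closeE iab aa Jab Ja.
have [w Ew] : exists w, a = w ** (a ** b) ** a.
  apply: stabL; case/andP: Jp => h _; case/andP: Ja => _ h'; exact: leJ_trans h' h.
have Ep : a ** (a ** b ** a) = a ** b ** a by rewrite !mA aa.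
have Ew' : a = w ** (a ** b ** a) by rewrite {1}Ew !mA.
have H : a = a ** b ** a by rewrite {1}Ew' -{1}ip mA -Ew' Ep.
by rewrite -H.
Qed.

Lemma rb3 a b c : a ** a = a -> b ** b = b -> c ** c = c -> J a -> J b -> J c ->
  a ** b ** c = a ** c.
Proof.
move=> aa bb cc Ja Jb Jc.
have [ibc Jbc] := closeE bb cc Jb Jc.
rewrite -{1}(rb cc aa Jc Ja) !mA.
have -> : a ** b ** c ** a = a ** (b ** c) ** a by rewrite !mA.
by rewrite rb.
Qed.

Lemma idem_of x x' : x = x ** x' ** x ->
  (x' ** x) ** (x' ** x) = x' ** x /\ (x ** x') ** (x ** x') = x ** x'.
Proof.
move=> E; split.
  have -> : x' ** x ** (x' ** x) = x' ** (x ** x' ** x) by rewrite !mA.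
  by rewrite -E.
by rewrite mA -E.
Qed.

Lemma key x y : J x -> J y -> x ** f ** y = x ** y.
Proof.
move=> Jx Jy.
have [x' Ex] := regular Jx; have [y' Ey] := regular Jy.
have [ig' _] := idem_of Ex; have [_ ig] := idem_of Ey.
have Jg' : J (x' ** x).
  apply: (leJ_jeq Jx); first by rewrite {1}Ex -mA; exact: leJ_r.
  apply: leJ_trans (leJ_r _ _) _; by case/andP: Jx.
have Jg : J (y ** y').
  apply: (leJ_jeq Jy); first by rewrite {1}Ey; exact: leJ_l.
  apply: leJ_trans (leJ_l _ _) _; by case/andP: Jy.
have -> : x ** f ** y = x ** (x' ** x ** f ** (y ** y')) ** y.
  by rewrite {1}Ex {1}Ey !mA.
rewrite (rb3 ig' ff ig Jg' Jf Jg).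
have -> : x ** (x' ** x ** (y ** y')) ** y = (x ** x' ** x) ** (y ** y' ** y) by rewrite !mA.
by rewrite -Ex -Ey.
Qed.

Lemma F2 x y : J x -> J y -> J (x ** y).
Proof.
move=> Jx Jy.
have [x' Ex] := regular Jx; have [y' Ey] := regular Jy.
have [ig' _] := idem_of Ex; have [_ ig] := idem_of Ey.
have Jg' : J (x' ** x).
  apply: (leJ_jeq Jx); first by rewrite {1}Ex -mA; exact: leJ_r.
  apply: leJ_trans (leJ_r _ _) _; by case/andP: Jx.
have Jg : J (y ** y').
  apply: (leJ_jeq Jy); first by rewrite {1}Ey; exact: leJ_l.
  apply: leJ_trans (leJ_l _ _) _; by case/andP: Jy.
have [_ J2] := closeE ig' ig Jg' Jg.
apply/andP; split.
  case/andP: J2 => h _; apply: leJ_trans h _.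
  by apply/leJP; exists x', y'; rewrite !mA.
apply: leJ_trans (leJ_l _ _) _; by case/andP: Jx.
Qed.


Lemma ffR X : X ** f ** f = X ** f. Proof. by rewrite -mA ff. Qed.

Lemma JfL x : leJ x f -> leJ f x = J x.
Proof. by move=> h; rewrite /jeq h andbT. Qed.

Lemma Jdown x y : J x -> leJ x y -> leJ y f -> J y.
Proof. exact: leJ_jeq. Qed.

Lemma leJf_l s : leJ (f ** s) f. Proof. exact: leJ_l. Qed.
Lemma leJf_r s : leJ (s ** f) f. Proof. exact: leJ_r. Qed.

Lemma HH s t : J (f ** s ** f) -> J (f ** t ** f) ->
  f ** s ** t ** f = (f ** s ** f) ** (f ** t ** f).
Proof.
move=> Js Jt.
have Jfs : J (f ** s) by apply: Jdown Js (leJ_l _ _) (leJf_l _).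
have Jtf : J (t ** f).
  apply: Jdown Jt _ (leJf_r _); rewrite -mA; exact: leJ_r.
have := key Jfs Jtf.
have -> : f ** s ** f ** (t ** f) = f ** s ** f ** (f ** t ** f) by rewrite !mA ffR.
by move=> ->; rewrite !mA.
Qed.

Lemma H1 s t : J (f ** s ** t ** f) -> J (f ** s ** f) /\ J (f ** t ** f).
Proof.
move=> Jst.
have Jfs : J (f ** s).
  apply: Jdown Jst _ (leJf_l _); apply/leJP; exists one, (t ** f); by rewrite m1x !mA.
have Jtf : J (t ** f).
  apply: Jdown Jst _ (leJf_r _); apply/leJP; exists (f ** s), one; by rewrite mx1 !mA.
split; first exact: F2 Jfs Jf.
by rewrite -mA; apply: F2 Jf Jtf.
Qed.

Lemma TRI s t u : J s -> J t -> J u -> s ** t ** u = s ** (f ** t ** f) ** u.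
Proof.
move=> Js Jt Ju.
have -> : s ** (f ** t ** f) ** u = s ** f ** (t ** f ** u) by rewrite !mA.
by rewrite key ?key // ?mA // F2.
Qed.

Lemma EF e : e ** e = e -> J (e ** f) -> f ** e ** f = f.
Proof.
move=> ee Jef.
have Jfef : J (f ** e ** f) by rewrite -mA; apply: F2 Jf Jef.
have Jfe : J (f ** e) by apply: Jdown Jfef (leJ_l _ _) (leJf_l _).
have ip : (f ** e ** f) ** (f ** e ** f) = f ** e ** f.
  have := key Jfe Jef.
  have -> : f ** e ** f ** (e ** f) = (f ** e ** f) ** (f ** e ** f) by rewrite !mA ffR.
  move=> ->.
  have -> : f ** e ** (e ** f) = f ** (e ** e) ** f by rewrite !mA.
  by rewrite ee.
have [w Ew] : exists w, f = f ** (e ** f) ** w.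
  by apply: stabR; rewrite mA; case/andP: Jfef.
have Ew' : f = (f ** e ** f) ** w by rewrite {1}Ew mA.
have H : f ** e ** f ** f = f ** e ** f by rewrite -mA ff.
have h : f ** e ** f = f ** e ** f ** (f ** e ** f ** w) by rewrite -Ew' H.
by rewrite h mA ip -Ew'.
Qed.

Lemma P1 e m : e ** e = e ->
  J (f ** (e ** m) ** f) || J (f ** (e ** m ** e) ** f) ->
  f ** (e ** m) ** f = f ** (e ** m ** e) ** f.
Proof.
move=> ee H.
have [Jfe Jfem] : J (f ** e) /\ J (f ** e ** m).
  have h2 : J (f ** e ** m).
    case/orP: H => h.
      by apply: (Jdown h); [lej one f | lej one (e ** m)].
    by apply: (Jdown h); [lej one (e ** f) | lej one (e ** m)].
  by split=> //; apply: (Jdown h2); [lej one m | lej one e].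
have Jfef : J (f ** e ** f) by apply: F2 Jfe Jf.
have Jef : J (e ** f) by apply: (Jdown Jfef); [lej f one | lej e one].
have E := EF ee Jef.
have := key Jfem Jef.
have -> : f ** e ** m ** f ** (e ** f) = f ** e ** m ** (f ** e ** f) by rewrite !mA.
rewrite E => h.
have -> : f ** (e ** m) ** f = f ** e ** m ** f by rewrite !mA.
by rewrite h !mA.
Qed.

Lemma P2 e n : e ** e = e ->
  J (f ** (n ** e) ** f) || J (f ** (e ** n ** e) ** f) ->
  f ** (n ** e) ** f = f ** (e ** n ** e) ** f.
Proof.
move=> ee H.
have [Jef Jnef] : J (e ** f) /\ J (n ** e ** f).
  have h2 : J (n ** e ** f).
    case/orP: H => h.
      by apply: (Jdown h); [lej f one | lej (n ** e) one].
    by apply: (Jdown h); [lej (f ** e) one | lej (n ** e) one].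
  by split=> //; apply: (Jdown h2); [lej n one | lej e one].
have E := EF ee Jef.
have Jfe : J (f ** e).
  apply/andP; split; last by lej one e.
  by rewrite -{1}E; lej one f.
have := key Jfe Jnef.
have -> : f ** e ** f ** (n ** e ** f) = (f ** e ** f) ** n ** e ** f by rewrite !mA.
rewrite E => h.
have -> : f ** (n ** e) ** f = f ** n ** e ** f by rewrite !mA.
by rewrite h !mA.
Qed.

End Jf.


Lemma idR x X : x ** x = x -> X ** x ** x = X ** x.
Proof. by move=> h; rewrite -mA h. Qed.

Section Alg.
Variable k : fieldType.
Local Notation A := {ffun M -> k}.
Local Notation mc := (mconv mul).
Local Notation dl := (mdelta k).
Local Open Scope ring_scope.

Lemma mconvE (f g : A) m :
  mc f g m = \sum_a \sum_b ((a ** b == m)%:R * (f a * g b)).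
Proof.
rewrite ffunE; apply: eq_bigr => a _; rewrite big_mkcond; apply: eq_bigr => b _.
by case: eqP; rewrite ?mul1r ?mul0r.
Qed.

Lemma sum_pick (y : M) (F : M -> k) : \sum_x ((y == x)%:R * F x) = F y.
Proof.
rewrite (bigD1 y) //= eqxx mul1r big1 ?addr0 // => x nx.
by rewrite eq_sym (negbTE nx) mul0r.
Qed.

Lemma sum_pick' (y : M) (F : M -> k) : \sum_x ((x == y)%:R * F x) = F y.
Proof. by rewrite -(sum_pick y); apply: eq_bigr => x _; rewrite eq_sym. Qed.

Lemma mconvDl (f1 f2 g : A) : mc (f1 + f2) g = mc f1 g + mc f2 g.
Proof.
apply/ffunP => m; rewrite !ffunE -big_split; apply: eq_bigr => a _.
rewrite -big_split; apply: eq_bigr => b _; by rewrite ffunE mulrDl.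
Qed.

Lemma mconvDr (f g1 g2 : A) : mc f (g1 + g2) = mc f g1 + mc f g2.
Proof.
apply/ffunP => m; rewrite !ffunE -big_split; apply: eq_bigr => a _.
rewrite -big_split; apply: eq_bigr => b _; by rewrite ffunE mulrDr.
Qed.

Lemma mconvNl (f g : A) : mc (- f) g = - mc f g.
Proof.
apply/ffunP => m; rewrite !ffunE -sumrN; apply: eq_bigr => a _.
rewrite -sumrN; apply: eq_bigr => b _; by rewrite ffunE mulNr.
Qed.

Lemma mconvNr (f g : A) : mc f (- g) = - mc f g.
Proof.
apply/ffunP => m; rewrite !ffunE -sumrN; apply: eq_bigr => a _.
rewrite -sumrN; apply: eq_bigr => b _; by rewrite ffunE mulrN.
Qed.

Lemma mconv0l (g : A) : mc 0 g = 0.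
Proof.
apply/ffunP => m; rewrite !ffunE big1 // => a _; rewrite big1 // => b _.
by rewrite ffunE mul0r.
Qed.

Lemma mconv0r (g : A) : mc g 0 = 0.
Proof.
apply/ffunP => m; rewrite !ffunE big1 // => a _; rewrite big1 // => b _.
by rewrite ffunE mulr0.
Qed.

Lemma mconvBl (f1 f2 g : A) : mc (f1 - f2) g = mc f1 g - mc f2 g.
Proof. by rewrite mconvDl mconvNl. Qed.
Lemma mconvBr (f g1 g2 : A) : mc f (g1 - g2) = mc f g1 - mc f g2.
Proof. by rewrite mconvDr mconvNr. Qed.

Definition T3 (f g h : A) m :=
  \sum_a \sum_b \sum_c ((a ** b ** c == m)%:R * (f a * g b * h c)).

Lemma mconv3L (f g h : A) m : mc (mc f g) h m = T3 f g h m.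
Proof.
rewrite mconvE /T3.
transitivity (\sum_x \sum_c \sum_a \sum_b
   ((x ** c == m)%:R * ((a ** b == x)%:R * (f a * g b)) * h c)).
  apply: eq_bigr => x _; apply: eq_bigr => c _.
  rewrite mconvE mulr_suml mulr_sumr; apply: eq_bigr => a _ /=.
  by rewrite mulr_suml mulr_sumr; apply: eq_bigr => b _; rewrite !mulrA.
transitivity (\sum_c \sum_a \sum_b \sum_x
   ((x ** c == m)%:R * ((a ** b == x)%:R * (f a * g b)) * h c)).
  rewrite exchange_big; apply: eq_bigr => c _.
  rewrite exchange_big; apply: eq_bigr => a _.
  by rewrite exchange_big.
rewrite exchange_big; apply: eq_bigr => a _.
rewrite exchange_big; apply: eq_bigr => b _.
apply: eq_bigr => c _.
rewrite -(sum_pick (a ** b) (fun x => (x ** c == m)%:R * (f a * g b * h c))).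
by apply: eq_bigr => x _; ring.
Qed.

Lemma mconv3R (f g h : A) m : mc f (mc g h) m = T3 f g h m.
Proof.
rewrite mconvE /T3.
transitivity (\sum_a \sum_y \sum_b \sum_c
   ((a ** y == m)%:R * (f a * ((b ** c == y)%:R * (g b * h c))))).
  apply: eq_bigr => a _; apply: eq_bigr => y _.
  rewrite mconvE mulr_sumr mulr_sumr; apply: eq_bigr => b _ /=.
  by rewrite mulr_sumr mulr_sumr.
apply: eq_bigr => a _.
rewrite exchange_big; apply: eq_bigr => b _.
rewrite exchange_big; apply: eq_bigr => c _.
rewrite -mA -(sum_pick (b ** c) (fun y => (a ** y == m)%:R * (f a * g b * h c))).
by apply: eq_bigr => x _; ring.
Qed.

Lemma mconvA (f g h : A) : mc (mc f g) h = mc f (mc g h).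
Proof. by apply/ffunP => m; rewrite mconv3L mconv3R. Qed.

Lemma mconv_dl a b : mc (dl a) (dl b) = dl (a ** b).
Proof.
apply/ffunP => m; rewrite mconvE [RHS]ffunE.
rewrite (eq_bigr (fun x => (a == x)%:R * ((x ** b == m)%:R))).
  by rewrite (sum_pick a (fun x => (x ** b == m)%:R)) eq_sym.
move=> x _; rewrite (eq_bigr (fun y => (b == y)%:R * ((x ** y == m)%:R * (a == x)%:R))).
  by rewrite (sum_pick b (fun y => (x ** y == m)%:R * (a == x)%:R)) mulrC.
by move=> y _; rewrite !ffunE (eq_sym y) (eq_sym x); ring.
Qed.

Lemma mconv1l (g : A) : mc (dl one) g = g.
Proof.
apply/ffunP => m; rewrite mconvE.
rewrite (eq_bigr (fun x => (one == x)%:R * (\sum_b ((x ** b == m)%:R * g b)))).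
  rewrite (sum_pick one (fun x => \sum_b ((x ** b == m)%:R * g b))).
  under eq_bigr => b _ do rewrite m1x.
  by rewrite (sum_pick' m g).
move=> x _; rewrite mulr_sumr; apply: eq_bigr => b _; rewrite !ffunE (eq_sym x one); ring.
Qed.

Lemma mconv1r (g : A) : mc g (dl one) = g.
Proof.
apply/ffunP => m; rewrite mconvE.
rewrite (eq_bigr (fun x => g x * (x == m)%:R)).
  by rewrite -(sum_pick' m g); apply: eq_bigr => x _; rewrite mulrC.
move=> x _.
rewrite (eq_bigr (fun y => (one == y)%:R * ((x ** y == m)%:R * g x))).
  by rewrite (sum_pick one (fun y => (x ** y == m)%:R * g x)) mx1 mulrC.
by move=> y _; rewrite !ffunE (eq_sym y one); ring.
Qed.


Fixpoint pw (z : A) n := if n is n'.+1 then mc (pw z n') z else dl one.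

Lemma pwD z a b : pw z (a + b)%N = mc (pw z a) (pw z b).
Proof.
elim: b => [|b IH]; first by rewrite addn0 /= mconv1r.
by rewrite addnS /= IH mconvA.
Qed.

Lemma pwM z a n : pw (pw z a) n = pw z (a * n)%N.
Proof.
elim: n => [|n IH]; first by rewrite muln0.
by rewrite /= IH mulnS addnC pwD.
Qed.

Lemma tele z n : mc (\sum_(j < n) pw z j) (dl one - z) = dl one - pw z n.
Proof.
elim: n => [|n IH]; first by rewrite big_ord0 mconv0l /= subrr.
rewrite big_ord_recr /= mconvDl IH mconvBr mconv1r.
by rewrite addrA subrK.
Qed.

Lemma rad_nil (x : A) : (forall a, exists n, pw (mc a x) n = 0) -> jacobson_rad mul x.
Proof.
move=> nil I [[I0 ID IM] [y nIy] maxI].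
case: (classic (I x)) => // nIx; exfalso.
pose Jp z := exists i a, I i /\ z = i + mc a x.
have JL : is_left_ideal mul Jp.
  split.
  - by exists 0, 0; rewrite mconv0l addr0.
  - move=> z1 z2 [i1 [a1 [Ii1 ->]]] [i2 [a2 [Ii2 ->]]].
    exists (i1 + i2), (a1 + a2); split; first exact: ID.
    by rewrite mconvDl addrACA.
  - move=> b z [i [a [Ii ->]]]; exists (mc b i), (mc b a); split; first exact: IM.
    by rewrite mconvDr mconvA.
have sub : forall z, I z -> Jp z by move=> z Iz; exists z, 0; rewrite mconv0l addr0.
have Jx : Jp x by exists 0, (dl one); rewrite mconv1l add0r.
have all : forall z, Jp z.
  move=> z; case: (classic (exists z, ~ Jp z)) => [ex|no].
    by case: nIx; apply: (maxI Jp JL sub ex).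
  by apply: NNPP => nz; apply: no; exists z.
have [i [a [Ii E]]] := all (dl one).
have [n Hn] := nil a.
have : I (mc (\sum_(j < n) pw (mc a x) j) i) by apply: IM.
have -> : i = dl one - mc a x by rewrite E addrK.
rewrite tele Hn subr0 => I1.
by apply: nIy; rewrite -(mconv1r y); apply: IM.
Qed.


Definition Kp (x : A) := forall f h, f ** f = f -> jeq f h ->
  \sum_(t | f ** t ** f == h) x t = 0.

Lemma part0 (x : A) f (Q P : pred M) : Kp x -> f ** f = f ->
  (forall u, P u = jeq f (f ** u ** f) && Q (f ** u ** f)) ->
  \sum_u ((P u)%:R * x u) = 0.
Proof.
move=> Kx ff HP.
rewrite (eq_bigr (fun u => if P u then x u else 0)); last first.
  by move=> u _; case: (P u); rewrite ?mul1r ?mul0r.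
rewrite -big_mkcond.
rewrite (partition_big (fun u => f ** u ** f) (fun h' => jeq f h' && Q h')); last first.
  by move=> u; rewrite HP.
apply: big1 => h' /andP [Jh' Qh'].
rewrite (eq_bigl (fun u => f ** u ** f == h')) ?Kx // => u.
by rewrite HP; case: eqP => [->|]; rewrite ?Jh' ?Qh' ?andbF.
Qed.

Lemma sum_conv (P : pred M) (a x : A) :
  \sum_(t | P t) mc a x t = \sum_s \sum_u ((P (s ** u))%:R * (a s * x u)).
Proof.
rewrite big_mkcond.
transitivity (\sum_t \sum_s \sum_u ((s ** u == t)%:R * ((P t)%:R * (a s * x u)))).
  apply: eq_bigr => t _; rewrite mconvE.
  case: (P t).
    by apply: eq_bigr => s _; apply: eq_bigr => u _; rewrite mul1r.
  by rewrite big1 // => s _; rewrite big1 // => u _; rewrite mul0r mulr0.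
rewrite exchange_big; apply: eq_bigr => s _.
rewrite exchange_big; apply: eq_bigr => u _.
by rewrite (sum_pick (s ** u) (fun t => (P t)%:R * (a s * x u))).
Qed.

Lemma K_mull (a x : A) : Kp x -> Kp (mc a x).
Proof.
move=> Kx f h ff Jh.
rewrite sum_conv big1 // => s _.
rewrite (eq_bigr (fun u => a s * ((f ** (s ** u) ** f == h)%:R * x u))); last first.
  by move=> u _; rewrite mulrCA.
rewrite -mulr_sumr.
rewrite (part0 (Q := fun h' => jeq f (f ** s ** f) && (f ** s ** f ** h' == h)) Kx ff).
  by rewrite mulr0.
move=> u.
have E : f ** (s ** u) ** f = f ** s ** u ** f by rewrite !mA.
rewrite E; apply/eqP/idP.
  move=> Eh; have Jsu : jeq f (f ** s ** u ** f) by rewrite Eh.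
  have [Js Ju] := H1 ff Jsu.
  by rewrite Ju Js -(HH ff Js Ju) Eh eqxx.
case/and3P => Ju Js /eqP <-.
exact: HH.
Qed.

Definition cube (x : A) := mc (mc x x) x.

Lemma pw3 (x : A) : pw x 3 = cube x.
Proof. by rewrite /= mconv1l. Qed.

Lemma K_nilp (n : nat) : forall (I : {set M}) (x : A), (#|I| <= n)%N ->
  (forall u a b, u \in I -> a ** u ** b \in I) ->
  (forall t, t \notin I -> x t = 0) -> Kp x -> exists N, pw x N = 0.
Proof.
elim: n => [|n IH] I x cI idI sx Kx.
  exists 1; have -> : x = 0.
    apply/ffunP => t; rewrite ffunE sx //.
    by move: cI; rewrite leqn0 => /eqP/cards0_eq ->; rewrite inE.
  by rewrite /= mconv0r.
case: (set_0Vmem I) => [I0|[t1 t1I]].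
  exists 1; have -> : x = 0 by apply/ffunP => t; rewrite ffunE sx // I0 inE.
  by rewrite /= mconv0r.
pose idl t := [set v | leJ v t].
case: (@arg_maxnP _ t1 (mem I) (fun t => #|idl t|) t1I) => t0 t0I t0max.
have maxi : forall u, u \in I -> leJ t0 u -> leJ u t0.
  move=> u uI lt.
  have sub : idl t0 \subset idl u.
    by apply/subsetP => v; rewrite !inE => h; apply: leJ_trans h lt.
  have : idl t0 == idl u by rewrite eqEcard sub /=; apply: (t0max u uI).
  move/eqP => E; have : u \in idl u by rewrite inE leJ_refl.
  by rewrite -E inE.
pose Jc := [set u in I | jeq t0 u].
have up : forall u v, u \in I -> leJ v u -> v \in Jc -> u \in Jc.
  move=> u v uI lvu; rewrite !inE => /andP [_ /andP [h1 h2]].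
  have l : leJ t0 u by apply: leJ_trans h1 lvu.
  by rewrite uI /jeq l maxi.
pose I' := I :\: Jc.
have idI' : forall u a b, u \in I' -> a ** u ** b \in I'.
  move=> u a b; rewrite in_setD => /andP [nJ uI].
  rewrite in_setD (idI u a b uI) andbT; apply/negP => aJ.
  exact: (negP nJ) (up u _ uI (leJ_sw a u b) aJ).
have cI' : (#|I'| <= n)%N.
  have : I' \proper I.
    apply/properP; split; first exact: subsetDl.
    have tJ : t0 \in Jc by rewrite inE /jeq leJ_refl !andbT; exact: t0I.
    by exists t0; [exact: t0I | rewrite in_setD tJ].
  move/proper_card => h; rewrite -ltnS; exact: leq_trans h cI.
have Kc : Kp (cube x) by rewrite /cube; apply: K_mull.
have sc : forall t, t \notin I' -> cube x t = 0.
  move=> t tI'; rewrite /cube mconv3L /T3.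
  case tI: (t \in I); last first.
    apply: big1 => a _; apply: big1 => b _; apply: big1 => c _.
    case: (boolP (a \in I)) => aI; last by rewrite (sx a aI) !mul0r mulr0.
    have abcI : a ** b ** c \in I by have := idI a one (b ** c) aI; rewrite m1x mA.
    have -> : (a ** b ** c == t) = false.
      by apply/eqP => E; move: tI; rewrite -E abcI.
    by rewrite mul0r.
  have tJ : t \in Jc.
    by move: tI'; rewrite in_setD tI andbT negbK.
  have leJt : forall u, u \in Jc -> leJ u t /\ leJ t0 u.
    move=> u; rewrite inE => /andP [_ /andP [h1 h2]].
    move: tJ; rewrite inE => /andP [_ /andP [h3 h4]].
    by split; [apply: leJ_trans h2 h3 | ].
  apply: big1 => a _; rewrite exchange_big; apply: big1 => c _.
  case: (boolP (a \in I)) => aI; last first.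
    by apply: big1 => b _; rewrite (sx a aI) !mul0r mulr0.
  case: (boolP (c \in I)) => cIn; last first.
    by apply: big1 => b _; rewrite (sx c cIn) !mulr0.
  rewrite (eq_bigr (fun b => x a * x c * ((a ** b ** c == t)%:R * x b))); last first.
    by move=> b _; ring.
  rewrite -mulr_sumr.
  suff -> : \sum_b ((a ** b ** c == t)%:R * x b) = 0 by rewrite mulr0.
  have abc_in : forall b, b \in I -> a ** b ** c = t -> [/\ a \in Jc, b \in Jc & c \in Jc].
    move=> b bI E; split.
    - by apply: (up a t aI _ tJ); rewrite -E -mA; exact: leJ_l.
    - by apply: (up b t bI _ tJ); rewrite -E; exact: leJ_sw.
    - by apply: (up c t cIn _ tJ); rewrite -E; exact: leJ_r.
  case: (boolP [exists f in Jc, f ** f == f]) => [/existsP [f /andP [fJ /eqP ff]] | noE].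
    have JfJ : forall u, u \in Jc -> jeq f u.
      move=> u; rewrite inE => /andP [_ h]; move: fJ; rewrite inE => /andP [_ h'].
      by apply: jeq_trans h; rewrite jeq_sym.
    rewrite (eq_bigr (fun b => ((jeq f (f ** b ** f) && (a ** (f ** b ** f) ** c == t))%:R * x b))).
      by apply: (part0 (Q := fun h' => a ** h' ** c == t) Kx ff).
    move=> b _.
    case: (boolP (b \in I)) => bI; last by rewrite (sx b bI) !mulr0.
    suff -> : (a ** b ** c == t) = (jeq f (f ** b ** f) && (a ** (f ** b ** f) ** c == t)) by [].
    apply/idP/idP.
      move=> /eqP E; have [aJ bJ cJ] := abc_in b bI E.
      have Jb := JfJ b bJ.
      have Jfbf : jeq f (f ** b ** f) by exact: (F2 ff (F2 ff (Jf f) Jb) (Jf f)).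
      by rewrite Jfbf -(TRI ff (JfJ a aJ) Jb (JfJ c cJ)) E eqxx.
    case/andP => Jfbf /eqP E.
    have aJ : a \in Jc by apply: (up a t aI _ tJ); rewrite -E -!mA; exact: leJ_l.
    have cJ : c \in Jc by apply: (up c t cIn _ tJ); rewrite -E; exact: leJ_r.
    have bJ : b \in Jc.
      have [_ lf] := leJt f fJ.
      have l1 : leJ t0 b.
        apply: leJ_trans lf _; apply: leJ_trans (leJ_sw f b f).
        by case/andP: Jfbf.
      by rewrite inE bI /jeq l1 (maxi b bI l1).
    by rewrite (TRI ff (JfJ a aJ) (JfJ b bJ) (JfJ c cJ)) E eqxx.
  apply: big1 => b _.
  case: (boolP (b \in I)) => bI; last by rewrite (sx b bI) mulr0.
  have -> : (a ** b ** c == t) = false; last by rewrite mul0r.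
  apply/eqP => E; have [aJ bJ cJ] := abc_in b bI E.
  have [lbt _] := leJt b bJ.
  have lb : leJ b (a ** b ** c) by rewrite E.
  have [E' [iE lEc lbE]] := nullJ lb.
  have EI : E' \in I by case/leJP: lEc => p [q ->]; apply: idI.
  have EJ : E' \in Jc.
    have [lct _] := leJt c cJ.
    have [_ l0b] := leJt b bJ.
    have [_ l0t] := leJt t tJ.
    rewrite inE EI /jeq (leJ_trans l0b lbE) /=.
    apply: leJ_trans lEc _; move: cJ; rewrite inE => /andP [_ /andP [_ ?]] //.
  by move/existsP: noE; apply; exists E'; rewrite EJ iE eqxx.

have [N HN] := IH I' (cube x) cI' idI' sc Kc.
by exists (3 * N)%N; rewrite -pwM pw3.
Qed.


Lemma subfE (f g : A) t : (f - g) t = f t - g t.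
Proof. by rewrite !ffunE. Qed.

Lemma sum_delta (P : pred M) a : \sum_(t | P t) dl a t = (P a)%:R.
Proof.
rewrite big_mkcond (bigD1 a) //= ffunE eqxx big1 ?addr0.
  by case: (P a).
by move=> t /negbTE nt; rewrite ffunE nt; case: (P t).
Qed.

Lemma Kp_y1 e m : e ** e = e -> Kp (dl (e ** m ** e) - dl (e ** m)).
Proof.
move=> ee f h ff Jh.
under eq_bigr => t _ do rewrite subfE.
rewrite sumrB !sum_delta.
have E : forall b, (b = f ** (e ** m) ** f \/ b = f ** (e ** m ** e) ** f) -> b = h ->
  f ** (e ** m) ** f = f ** (e ** m ** e) ** f.
  move=> b Hb Ebh; apply: P1 ee _ => //.
  by case: Hb => <-; rewrite Ebh Jh ?orbT.
have key : (f ** (e ** m) ** f == h) = (f ** (e ** m ** e) ** f == h).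
  apply/eqP/eqP => Eq.
  - by rewrite -(E _ (or_introl erefl) Eq).
  - by rewrite (E _ (or_intror erefl) Eq).
by rewrite key subrr.
Qed.

Lemma Kp_y2 e n : e ** e = e -> Kp (dl (n ** e) - dl (e ** n ** e)).
Proof.
move=> ee f h ff Jh.
under eq_bigr => t _ do rewrite subfE.
rewrite sumrB !sum_delta.
have E : forall b, (b = f ** (n ** e) ** f \/ b = f ** (e ** n ** e) ** f) -> b = h ->
  f ** (n ** e) ** f = f ** (e ** n ** e) ** f.
  move=> b Hb Ebh; apply: P2 ee _ => //.
  by case: Hb => <-; rewrite Ebh Jh ?orbT.
have key : (f ** (n ** e) ** f == h) = (f ** (e ** n ** e) ** f == h).
  apply/eqP/eqP => Eq.
  - by rewrite -(E _ (or_introl erefl) Eq).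
  - by rewrite (E _ (or_intror erefl) Eq).
by rewrite key subrr.
Qed.

Lemma rad_of_K (y : A) : Kp y -> jacobson_rad mul y.
Proof.
move=> Ky; apply: rad_nil => a.
apply: (@K_nilp #|M| [set: M]) => //.
- exact: max_card.
- by move=> t /negP[]; rewrite in_setT.
- exact: K_mull.
Qed.

Lemma part1 e m n : e ** e = e ->
  rad2_rel k mul (e ** m ** e ** n ** e) (e ** m ** n ** e).
Proof.
move=> ee.
exists [:: (dl (e ** m ** e) - dl (e ** m), dl (n ** e) - dl (e ** n ** e))]; split.
  move=> p; rewrite inE => /eqP -> /=; split; apply: rad_of_K.
    exact: Kp_y1.
  exact: Kp_y2.
rewrite big_seq1 /= mconvBl !mconvBr !mconv_dl.
have -> : e ** m ** e ** (e ** n ** e) = e ** m ** e ** n ** e by rewrite !mA idR.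
have -> : e ** m ** (e ** n ** e) = e ** m ** e ** n ** e by rewrite !mA.
have -> : e ** m ** e ** (n ** e) = e ** m ** e ** n ** e by rewrite !mA.
have -> : e ** m ** (n ** e) = e ** m ** n ** e by rewrite !mA.
by rewrite subrr sub0r opprB.
Qed.

End Alg.
End Mon.

Lemma band_rect (M : finType) (mul : M -> M -> M) (one : M) :
  monoid_assoc mul -> monoid_unit mul one -> band mul -> rectangular mul.
Proof.
move=> massoc munit B e f g _ _ _ Sfe Sge.
have mA' := mA massoc.
split; first exact: B.
move=> x; split.
  case=> a [b ->]; apply/(Sfe _); exists a, (mul g b); by rewrite mA'.
move=> H.
have [a' [b' ->]] := (Sfe x).2 H.
have [a0 [b0 Ef]] : exists a b, f = mul (mul a g) b.
  apply/(Sge f)/(Sfe f); exists one, one.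
  by rewrite (mx1 munit) (m1x munit).
have Bf : mul f f = f := B f.
have V := B (mul (mul g b0) f).
have Ef' : f = mul a0 (mul (mul g b0) f) by rewrite !mA' -Ef Bf.
have h : mul f (mul (mul g b0) f) = f.
  rewrite {1}Ef' -mA'.
  rewrite V.
  by rewrite -Ef'.
exists a', (mul (mul b0 f) b').
rewrite -{1}h; rewrite !mA'.
by [].
Qed.

Theorem mainTheorem13 :
  (forall (k : fieldType) (M : finType) (mul : M -> M -> M) (one : M),
     monoid_assoc mul -> monoid_unit mul one -> rectangular mul ->
     forall e : M, is_idem mul e ->
     forall m n : M,
       rad2_rel k mul (mul (mul (mul (mul e m) e) n) e) (mul (mul (mul e m) n) e))
  /\
  (forall (k : fieldType) (B : finType) (mul : B -> B -> B) (one : B),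
     monoid_assoc mul -> monoid_unit mul one -> band mul ->
     (* B / rad^2(B) is a regular band: it is a band (each class idempotent) *)
     (forall x : B, rad2_rel k mul (mul x x) x) /\
     (* and it satisfies xyxzx = xyzx *)
     (forall x y z : B,
        rad2_rel k mul (mul (mul (mul (mul x y) x) z) x) (mul (mul (mul x y) z) x))).
Proof.
split.
  move=> k M mul one massoc munit rect e ee m n.
  exact: (part1 massoc munit rect k m n ee).
move=> k B mul one massoc munit bnd; split.
  move=> x; have -> : mul x x = x := bnd x.
  by exists [::]; split => //; rewrite big_nil subrr.
move=> x y z.
exact: (part1 massoc munit (band_rect massoc munit bnd) k y z (bnd x)).
Qed.
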